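(* Let $F_t$, $t\in[0,1]$, be a one-parameter family on a complete metric space $(\mathbb X,d)$ satisfying (H1), (H2), (H3), and let $J=\{1\le i\le N:\mathrm{Lip}(f_{(i,1)},d)=1\}$. If the monoid $\mathbb M(\{f_{(i,1)}:i\in J\})$ is compact, then the lower transition attractor $A_\bullet$ of $F_t$ is compact.
   Context: Let $(\mathbb X,d)$ be a complete metric space. A one-parameter family is $F_t=\{f_{(1,t)},\dots,f_{(N,t)}\}$, $t\in[0,1]$, $N\ge2$, of continuous self-maps of $\mathbb X$. $\mathrm{Lip}(f,d)=\sup_{x\ne y}d(f(x),f(y))/d(x,y)$ and $\mathrm{Lip}(F_t,d)=\max_i\mathrm{Lip}(f_{(i,t)},d)$. Conditions: (H1) for every $x\in\mathbb X$ and every $i$, the map $t\mapsto f_{(i,t)}(x)$ is continuous on $[0,1]$; (H2) $\mathrm{Lip}(F_t,d)<1$ for all $t\in[0,1)$; (H3) for each $i$ the limit $q_i=\lim_{t\to1^-}q_{i,t}$ exists, where $q_{i,t}$ is the unique fixed point of $f_{(i,t)}$ for $t\in[0,1)$; $Q=\{q_1,\dots,q_N\}$. For an IFS $F$ (a finite or infinite family of continuous self-maps) and $S\subseteq\mathbb X$, the Hutchinson operator is $F(S)=\overline{\bigcup_{f\in F}f(S)}$. The lower transition attractor of $F_t$ is the smallest (w.r.t. inclusion) set $A_\bullet\subseteq\mathbb X$ with $F_1(A_\bullet)=A_\bullet$ and $Q\subseteq A_\bullet$. An IFS $F$ is compact if $F(K)$ is compact for every compact $K\subseteq\mathbb X$.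 The monoid of $F$ is $\mathbb M(F)=\{f_1\circ\cdots\circ f_k:f_j\in F,k\in\mathbb N\}\cup\{\mathrm{id}_{\mathbb X}\}$, regarded as an IFS. *)

(* Defs.v *)
From HB Require Import structures.
From mathcomp Require Import all_boot all_order all_algebra.
From mathcomp Require Import all_classical all_reals all_analysis.
Set Implicit Arguments. Unset Strict Implicit. Unset Printing Implicit Defensive.
Import Order.TTheory GRing.Theory Num.Theory.
Import numFieldNormedType.Exports.
Local Open Scope classical_set_scope.
Local Open Scope ring_scope.

Section Defs.
Context {R : realType} {X : metricType R}.

Definition complete_space : Prop :=
  forall u : nat -> X,
    (forall e : R, 0 < e -> exists n : nat, forall m k : nat, (n <= m)%N -> (n <= k)%N ->
        mdist (u m) (u k) < e) ->
    exists l : X, u @ \oo --> l.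

Definition Lip (f : X -> X) : \bar R :=
  ereal_sup [set r : \bar R | exists x y : X, x <> y /\ r = ((mdist (f x) (f y)) / mdist x y)%:E].

Definition LipF (N : nat) (F : 'I_N -> X -> X) : \bar R :=
  \big[Order.max/-oo%E]_(i < N) Lip (F i).

Definition Hutch (G : set (X -> X)) (S : set X) : set X :=
  closure (\bigcup_(g in G) g @` S).

Definition compact_IFS (G : set (X -> X)) : Prop :=
  forall K : set X, compact K -> compact (Hutch G K).

Definition monoid (G : set (X -> X)) : set (X -> X) :=
  [set h | exists s : seq (X -> X), (forall g, g \in s -> G g) /\ h = foldr comp id s].

Definition fam_at (N : nat) (f : 'I_N -> R -> X -> X) (t : R) : set (X -> X) :=
  [set f i t | i in setT].

Definition lower_transition_attractor (N : nat) (f : 'I_N -> R -> X -> X)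
    (q : 'I_N -> X) (A : set X) : Prop :=
  [/\ Hutch (fam_at f 1) A = A, range q `<=` A &
      forall B : set X, Hutch (fam_at f 1) B = B -> range q `<=` B -> A `<=` B].

End Defs.

(* Main.v *)
Require Import Defs.
From HB Require Import structures.
From mathcomp Require Import all_boot all_order all_algebra.
From mathcomp Require Import all_classical all_reals all_analysis.
From mathcomp Require Import lra.
Import Order.TTheory GRing.Theory Num.Theory.
Import numFieldNormedType.Exports.
Local Open Scope classical_set_scope.
Local Open Scope ring_scope.

Section Aux.
Context {R : realType} {X : metricType R}.
Local Notation d := (@mdist R X).

Definition lipb (g : X -> X) (c : R) := forall x y, d (g x) (g y) <= c * d x y.

Lemma lipb_mono g c c' : c <= c' -> lipb g c -> lipb g c'.
Proof.
move=> cc' h x y; apply: (le_trans (h x y)).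
by apply: ler_wpM2r => //; exact: mdist_ge0.
Qed.

Lemma lipb_comp g h a b : 0 <= a -> lipb g a -> lipb h b -> lipb (g \o h) (a * b).
Proof.
move=> a0 hg hh x y /=; apply: (le_trans (hg _ _)).
by rewrite -mulrA; apply: ler_wpM2l.
Qed.

Lemma Lip_lipb g c : (Lip g <= c%:E)%E -> lipb g c.
Proof.
move=> hL x y; have [->|xy] := eqVneq x y.
  by rewrite !mdistxx mulr0.
have dpos : 0 < d x y by rewrite mdist_gt0.
have : (((d (g x) (g y)) / d x y)%:E <= c%:E)%E.
  apply: le_trans hL; apply: ereal_sup_ubound; exists x, y; split => //.
  by apply/eqP.
rewrite lee_fin ler_pdivrMr //.
Qed.

Lemma lipb_Lip g c : lipb g c -> (Lip g <= c%:E)%E.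
Proof.
move=> h; apply/ereal_supP => _ [x [y [xy ->]]].
have dpos : 0 < d x y by rewrite mdist_gt0; apply/eqP.
by rewrite lee_fin ler_pdivrMr.
Qed.

Lemma Lip_lt1 g : (Lip g < 1%:E)%E -> exists2 c, 0 <= c < 1 & lipb g c.
Proof.
case E : (Lip g) => [r| |] //.
  rewrite lte_fin => r1; exists (Num.max r 0).
    by rewrite le_max lexx orbT /= gt_max r1 ltr01.
  apply: (@lipb_mono _ r); first by rewrite le_max lexx.
  by apply: Lip_lipb; rewrite E.
move=> _; exists 0; first by rewrite lexx ltr01.
by apply: Lip_lipb; rewrite E leNye.
Qed.

Lemma near_within01 (P : R -> Prop) :
  (\forall t \near within [set t : R | 0 <= t <= 1] (nbhs (1:R)), P t) ->
  exists2 e, 0 < e & forall t, 1 - e < t -> 0 <= t < 1 -> P t.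
Proof.
move=> /nbhs_ballP [e e0 H]; exists e => // t h /andP[t0 t1].
apply: H; last by apply/andP; split => //; exact: ltW.
rewrite /ball /= gtr0_norm ?subr_gt0 //.
by rewrite ltrBlDl -ltrBlDr.
Qed.

Lemma near_left1 (P : R -> Prop) :
  (\forall t \near (1:R)^'-, P t) ->
  exists2 e, 0 < e & forall t, 1 - e < t -> 0 <= t < 1 -> P t.
Proof.
move=> /nbhs_ballP [e e0 H]; exists e => // t h /andP[t0 t1].
apply: H => //.
rewrite /ball /= gtr0_norm ?subr_gt0 //.
by rewrite ltrBlDl -ltrBlDr.
Qed.

Lemma pick_t (e : R) : 0 < e -> exists t : R, [/\ 1 - e < t, 0 <= t & t < 1].
Proof.
move=> e0; exists (1 - Num.min e 1 / 2).
have m0 : 0 < Num.min e 1 by rewrite lt_min e0 ltr01.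
have m1 : Num.min e 1 <= 1 by rewrite ge_min lexx orbT.
have me : Num.min e 1 <= e by rewrite ge_min lexx.
split.
- rewrite ltrD2l ltrN2; apply: (lt_le_trans _ me).
  by rewrite ltr_pdivrMr // ltr_pMr // ltr1n.
- by rewrite subr_ge0 ler_pdivrMr // mul1r (le_trans m1) // ler1n.
- by rewrite gtrBl divr_gt0.
Qed.

End Aux.

Section Family.
Context {R : realType} {X : metricType R} (N : nat) (f : 'I_N -> R -> X -> X)
  (qt : 'I_N -> R -> X) (q : 'I_N -> X).
Context (H1 : forall i x (t0 : R), 0 <= t0 <= 1 ->
     (fun t => f i t x) @ within [set t : R | 0 <= t <= 1] (nbhs t0) --> f i t0 x)
  (H2 : forall t, 0 <= t < 1 -> (LipF (fun i => f i t) < 1%:E)%E)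
  (H3 : forall i t, 0 <= t < 1 -> f i t (qt i t) = qt i t)
  (H4 : forall i, qt i t @[t --> 1^'-] --> q i).
Local Notation d := (@mdist R X).

Lemma lipt i t : 0 <= t < 1 -> lipb (f i t) 1.
Proof.
move=> /H2 h; apply: Lip_lipb; apply/ltW; apply: le_lt_trans h.
by rewrite /LipF; exact: (le_bigmax _ (fun j => Lip (f j t)) i).
Qed.

Lemma near1 i x e : 0 < e ->
  exists2 a, 0 < a & forall t, 1 - a < t -> 0 <= t < 1 -> d (f i 1 x) (f i t x) < e.
Proof.
move=> e0.
have /(metricType_numDomainType.cvgrPdist_lt _ _) : (fun t => f i t x) @ within [set t : R | 0 <= t <= 1] (nbhs (1:R)) --> f i 1 x.
  by apply: H1; rewrite ler01 lexx.
move=> /(_ e e0); exact: near_within01.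
Qed.

Lemma f1_lip i : lipb (f i 1) 1.
Proof.
move=> x y; rewrite mul1r; apply/ler_addgt0Pr => e e0.
have e2 : 0 < e / 2 by rewrite divr_gt0.
have [a a0 Ha] := near1 i x (e/2) e2.
have [b b0 Hb] := near1 i y (e/2) e2.
have mab : 0 < Num.min a b by rewrite lt_min a0 b0.
have [t [ht t0 t1]] := pick_t _ mab.
have t01 : 0 <= t < 1 by rewrite t0 t1.
have hxy := lipt i t t01 x y.
have tr1 := metric_triangle (f i 1 x) (f i t x) (f i 1 y).
have tr2 := metric_triangle (f i t x) (f i t y) (f i 1 y).
rewrite (metric_sym (f i t y)) in tr2.
have m1 : 1 - a <= 1 - Num.min a b by rewrite lerD2l lerN2 ge_min lexx.
have m2 : 1 - b <= 1 - Num.min a b by rewrite lerD2l lerN2 ge_min lexx orbT.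
rewrite mul1r in hxy.
have hx := Ha t (le_lt_trans m1 ht) t01.
have hy := Hb t (le_lt_trans m2 ht) t01.
lra.
Qed.

Lemma fixq i : f i 1 (q i) = q i.
Proof.
apply: mdist_positivity; apply/eqP; rewrite eq_le mdist_ge0 andbT.
apply/ler_addgt0Pr => e e0; rewrite add0r.
have e3 : 0 < e / 3 by rewrite divr_gt0.
have [a a0 Ha] := near1 i (q i) (e/3) e3.
have /(metricType_numDomainType.cvgrPdist_lt _ _) := H4 i.
move=> /(_ _ e3) /near_left1 [b b0 Hb].
have mab : 0 < Num.min a b by rewrite lt_min a0 b0.
have [t [ht t0 t1]] := pick_t _ mab.
have t01 : 0 <= t < 1 by rewrite t0 t1.
have m1 : 1 - a <= 1 - Num.min a b by rewrite lerD2l lerN2 ge_min lexx.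
have m2 : 1 - b <= 1 - Num.min a b by rewrite lerD2l lerN2 ge_min lexx orbT.
have hx := Ha t (le_lt_trans m1 ht) t01.
have hq := Hb t (le_lt_trans m2 ht) t01.
have hl := lipt i t t01 (q i) (qt i t).
rewrite H3 // mul1r in hl.
have tr1 := metric_triangle (f i 1 (q i)) (f i t (q i)) (q i).
have tr2 := metric_triangle (f i t (q i)) (qt i t) (q i).
rewrite (metric_sym (qt i t)) in tr2.
lra.
Qed.

End Family.

Section Closure.
Context {T : topologicalType}.

Lemma image_closure (g : T -> T) (S : set T) : continuous g ->
  g @` closure S `<=` closure (g @` S).
Proof.
move=> gc _ [p Sp <-] B /gc/= nB.
have [x [Sx Bx]] := Sp _ nB.
by exists (g x); split => //; exists x.
Qed.

End Closure.

Section Attractor.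
Context {R : realType} {X : metricType R} (N : nat) (f : 'I_N -> R -> X -> X)
  (q : 'I_N -> X).
Context (cont1 : forall i, continuous (f i 1)) (fixq : forall i, f i 1 (q i) = q i).

Lemma monoid_cons (G : set (X -> X)) g h : G g -> monoid G h -> monoid G (g \o h).
Proof.
move=> Gg [s [Hs ->]]; exists (g :: s); split => // k.
by rewrite in_cons => /orP [/eqP -> //|]; exact: Hs.
Qed.

Lemma monoid_id (G : set (X -> X)) : monoid G id.
Proof. by exists [::]; split. Qed.

Definition MQ := [set p | exists h i, monoid (fam_at f 1) h /\ p = h (q i)].

Lemma fam_cont g : fam_at f 1 g -> continuous g.
Proof. by move=> [i _ <-]. Qed.

Lemma attr_fix : Hutch (fam_at f 1) (closure MQ) = closure MQ.
Proof.
apply/seteqP; split.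
  rewrite [X in _ `<=` X](closure_id _).1; last exact: closed_closure.
  apply: closureS => _ [g Gg /= [p Cp <-]].
  have : closure (g @` MQ) (g p) by apply: image_closure; [exact: fam_cont|exists p].
  suff sub : g @` MQ `<=` MQ by move/(closureS sub).
  move=> _ [x [h [i [Mh ->]]] <-].
  by exists (g \o h), i; split => //; exact: monoid_cons.
apply: closureS => _ [h [i [[s [Hs ->]] ->]]].
case: s Hs => [|g s] Hs /=.
  exists (f i 1); first by exists i.
  exists (q i); last by rewrite fixq.
  by apply: subset_closure; exists id, i; split => //; exact: monoid_id.
exists g; first by apply: Hs; rewrite mem_head.
exists (foldr comp id s (q i)) => //.
apply: subset_closure; exists (foldr comp id s), i; split => //.
by exists s; split => // k ks; apply: Hs; rewrite in_cons ks orbT.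
Qed.

Lemma attr_q : range q `<=` closure MQ.
Proof.
move=> _ [i _ <-]; apply: subset_closure; exists id, i; split => //.
exact: monoid_id.
Qed.

Lemma attr_min B : Hutch (fam_at f 1) B = B -> range q `<=` B -> closure MQ `<=` B.
Proof.
move=> HB qB.
have Bc : closed B by rewrite -HB; exact: closed_closure.
rewrite [X in _ `<=` X](closure_id _).1 //; apply: closureS.
move=> _ [h [i [[s [Hs ->]] ->]]].
elim: s Hs => [|g s IH] Hs /=; first by apply: qB; exists i.
rewrite -HB; apply: subset_closure; exists g; first by apply: Hs; rewrite mem_head.
exists (foldr comp id s (q i)) => //; apply: IH => k ks; apply: Hs.
by rewrite in_cons ks orbT.
Qed.

Lemma attr_lta : lower_transition_attractor f q (closure MQ).
Proof. by split; [exact: attr_fix|exact: attr_q|exact: attr_min]. Qed.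

End Attractor.

Section Complete.
Context {R : realType} {X : metricType R}.
Local Notation d := (@mdist R X).

Lemma small_inv (e : R) : 0 < e -> exists n : nat, (n.+1%:R)^-1 < e.
Proof.
move=> e0; exists (Num.truncn (e^-1)).
rewrite -[e in _ < e]invrK ltf_pV2 ?posrE ?invr_gt0 ?ltr0Sn //.
exact: truncnS_gt.
Qed.

Lemma inv_mono (m n : nat) : (n <= m)%N -> (m.+1%:R)^-1 <= (n.+1%:R)^-1 :> R.
Proof. by move=> nm; rewrite lef_pV2 ?posrE ?ltr0Sn // ler_nat. Qed.

Lemma ultra_seq (F : set_system X) (U : UltraFilter F) (s : seq X)
  (P : X -> set X) :
  F [set p | exists2 y, y \in s & P y p] -> exists2 y, y \in s & F (P y).
Proof.
elim: s => [|y s IH] Fs.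
  exfalso; apply: (@filter_not_empty _ F).
  by apply: filterS Fs => p [y].
have [FP|FnP] := in_ultra_setVsetC (P y) U.
  by exists y => //; rewrite mem_head.
have [z zs Fz] : exists2 z, z \in s & F (P z).
  apply: IH; apply: filterS (filterI FnP Fs) => p [nPp [z]].
  rewrite in_cons => /orP [/eqP ->|zs] Pz //.
  by exists z.
by exists z => //; rewrite in_cons zs orbT.
Qed.

Lemma nbhs_d (p : X) (e : R) : 0 < e -> nbhs p [set z | d p z < e].
Proof.
move=> e0; rewrite -metricType_numDomainType.filter_from_mdist_nbhs.
by exists e.
Qed.

Lemma tb_compact (S : set X) : @complete_space R X ->
  (forall e, 0 < e -> exists s : seq X, forall p, S p -> exists2 y, y \in s & d y p < e) ->
  compact (closure S).
Proof.
move=> cX tb; rewrite compact_ultra => F FU FS.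
have PF : ProperFilter F by exact: ultra_proper.
have step1 : forall e, 0 < e -> exists y, F [set p | d y p < e].
  move=> e e0; have e2 : 0 < e / 2 by rewrite divr_gt0.
  have [s hs] := tb _ e2.
  have : F [set p | exists2 y, y \in s & d y p < e].
    apply: filterS FS => p Cp.
    have [x [Sx px]] := Cp _ (nbhs_d p _ e2).
    have [y ys yx] := hs x Sx; exists y => //.
    have := metric_triangle y x p; rewrite (metric_sym x p) => tr.
    rewrite /= in px; lra.
  by move/(ultra_seq _ FU) => [y _ Fy]; exists y.
have rpos : forall k : nat, 0 < (k.+1%:R)^-1 :> R by move=> k; rewrite invr_gt0 ltr0Sn.
have [y Hy] := boolp.choice (fun k => step1 _ (rpos k)).
have cauchy : forall m k, d (y m) (y k) < (m.+1%:R)^-1 + (k.+1%:R)^-1.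
  move=> m k; have [x [h1 h2]] := filter_ex (filterI (Hy m) (Hy k)).
  have := metric_triangle (y m) x (y k); rewrite (metric_sym x) /= in h1 h2 *.
  move=> tr; apply: (le_lt_trans tr); exact: ltrD.
have [l yl] : exists l : X, y @ \oo --> l.
  apply: cX => e e0; have e2 : 0 < e / 2 by rewrite divr_gt0.
  have [n hn] := small_inv _ e2; exists n => m k nm nk.
  have := cauchy m k; have := inv_mono _ _ nm; have := inv_mono _ _ nk.
  move: hn; move: (m.+1%:R^-1) (k.+1%:R^-1) (n.+1%:R^-1) => a b c; lra.
have Fl : F --> l.
  apply/metricType_numDomainType.fcvgrPdist_lt => e e0.
  have e2 : 0 < e / 2 by rewrite divr_gt0.
  have [n hn] := small_inv _ e2.
  have /(metricType_numDomainType.cvgrPdist_lt _ _) := yl.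
  move=> /(_ _ e2) [N _ HN].
  pose k := maxn N n.
  have hk := HN k (leq_maxl N n).
  have rk : (k.+1%:R)^-1 <= (n.+1%:R)^-1 :> R := inv_mono _ _ (leq_maxr N n).
  apply: filterS (Hy k) => z /= hz.
  have := metric_triangle l (y k) z; move: hn rk hz.
  move: (k.+1%:R^-1) (n.+1%:R^-1) => a b; lra.
exists l; split => //.
rewrite [X in X l](closure_id _).1; last exact: closed_closure.
move=> B /Fl FB.
exact: filter_ex (filterI FS FB).
Qed.

Lemma compact_net (K : set X) (e : R) : compact K -> 0 < e ->
  exists s : seq X, forall p, K p -> exists2 y, y \in s & d y p < e.
Proof.
move=> cK e0; case: (pselect (exists s : seq X, forall p, K p -> exists2 y, y \in s & d y p < e)) => // H.
exfalso.
pose Fs (s : seq X) := K `\` [set z | exists2 y, y \in s & d y z < e].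
have Fne : forall s, Fs s !=set0.
  move=> s; apply: contrapT => hs; apply: H; exists s => p Kp.
  apply: contrapT => np; apply: hs; exists p; split => //.
have FF : Filter (filter_from [set: seq X] Fs).
  apply: filter_from_filter; first by exists [::].
  move=> s1 s2 _ _; exists (s1 ++ s2) => // z [Kz nz]; split; split => //.
    by move=> [y ys yz]; apply: nz; exists y => //; rewrite mem_cat ys.
  by move=> [y ys yz]; apply: nz; exists y => //; rewrite mem_cat ys orbT.
have PF : ProperFilter (filter_from [set: seq X] Fs).
  by apply: filter_from_proper => // s _; exact: Fne.
have FK : filter_from [set: seq X] Fs K by exists [::] => // z [].
have [p [Kp cp]] := cK _ PF FK.
have Fp : filter_from [set: seq X] Fs (Fs [:: p]) by exists [:: p].
have [z [[_ nz] pz]] := cp (Fs [:: p]) _ Fp (nbhs_d p _ e0).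
by apply: nz; exists p => //; rewrite mem_head.
Qed.

Lemma compact_bdd (K : set X) (x0 : X) : compact K ->
  exists M : R, forall p, K p -> d x0 p <= M.
Proof.
move=> cK; have [s hs] := compact_net _ _ cK ltr01.
pose M := foldr (fun y acc => Num.max (d x0 y) acc) 0 s.
have hM : forall y, y \in s -> d x0 y <= M.
  rewrite /M; elim: (s) => [//|z s' IH] y.
  rewrite in_cons => /orP [/eqP ->|ys] /=; first by rewrite le_max lexx.
  by rewrite le_max (IH y ys) orbT.
exists (M + 1) => p Kp; have [y ys yp] := hs p Kp.
have := metric_triangle x0 y p; have := hM y ys; lra.
Qed.

End Complete.

Section Main.
Context {R : realType} {X : metricType R} (N : nat) (f : 'I_N -> R -> X -> X)
  (q : 'I_N -> X) (i0 : 'I_N).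
Context (cont1 : forall i, continuous (f i 1))
  (flip : forall i, lipb (f i 1) 1)
  (lam : R) (lam0 : 0 <= lam) (lam1 : lam < 1)
  (hC : forall i, Lip (f i 1) <> 1%:E -> lipb (f i 1) lam)
  (HMJ : compact_IFS (monoid [set f i 1 | i in [set i | Lip (f i 1) = 1%:E]])).
Local Notation d := (@mdist R X).
Local Notation MJ := (monoid [set f i 1 | i in [set i | Lip (f i 1) = 1%:E]]).

Lemma foldr_rcons (s : seq (X -> X)) (a : X -> X) :
  foldr comp id (rcons s a) = foldr comp id s \o a.
Proof. by elim: s => [//|g s IH] /=; rewrite IH. Qed.

Lemma monoid_rcomp (G : set (X -> X)) g a : monoid G g -> G a -> monoid G (g \o a).
Proof.
move=> [s [Hs ->]] Ga; exists (rcons s a); split; last by rewrite foldr_rcons.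
by move=> k; rewrite -cats1 mem_cat => /orP [/Hs //|]; rewrite inE => /eqP ->.
Qed.

Lemma lipb_id : lipb (@id X) 1.
Proof. by move=> x y; rewrite mul1r. Qed.

Lemma MJ_lip g : MJ g -> lipb g 1.
Proof.
move=> [s [Hs ->]]; elim: s Hs => [|a s IH] Hs /=; first exact: lipb_id.
apply: (@lipb_mono _ _ _ (1*1)); first by rewrite mul1r.
apply: lipb_comp => //.
  by have [i _ <-] := Hs a (mem_head _ _); exact: flip.
by apply: IH => k ks; apply: Hs; rewrite in_cons ks orbT.
Qed.

Inductive Lpt : X -> Prop :=
| Lq (g : X -> X) (i : 'I_N) : MJ g -> Lpt (g (q i))
| Lc (g : X -> X) (j : 'I_N) (p : X) : MJ g -> Lip (f j 1) <> 1%:E -> Lpt p -> Lpt (g (f j 1 p)).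

Lemma MQ_L (s : seq (X -> X)) : (forall g, g \in s -> fam_at f 1 g) ->
  forall g i, MJ g -> Lpt (g (foldr comp id s (q i))).
Proof.
elim: s => [|a s IH] Hs g i Mg /=; first exact: Lq.
have Hs' : forall k, k \in s -> fam_at f 1 k.
  by move=> k ks; apply: Hs; rewrite in_cons ks orbT.
have [j _ aj] := Hs a (mem_head _ _); subst a.
case: (pselect (Lip (f j 1) = 1%:E)) => hj.
  have := IH Hs' (g \o f j 1) i (monoid_rcomp _ _ _ Mg (ex_intro2 _ _ j hj erefl)).
  by [].
by apply: Lc => //; apply: (IH Hs' id i); exact: monoid_id.
Qed.

Definition U (S : set X) : set X := \big[setU/set0]_(i < N) ([set q i] `|` f i 1 @` S).

Lemma U_q S i : U S (q i).
Proof. by rewrite /U (bigD1 i) //=; left; left. Qed.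

Lemma U_f S i x : S x -> U S (f i 1 x).
Proof. by move=> Sx; rewrite /U (bigD1 i) //=; left; right; exists x. Qed.

Lemma U_compact S : compact S -> compact (U S).
Proof.
move=> cS; apply: bigsetU_compact => i _; apply: compactU; first exact: compact_set1.
by apply: continuous_compact => //; exact: continuous_subspaceT.
Qed.

Definition K (n : nat) : set X :=
  iter n (fun S => Hutch MJ (U S)) (Hutch MJ (U [set q i0])).

Lemma K_compact n : compact (K n).
Proof.
elim: n => [|n IH] /=; first by apply: HMJ; apply: U_compact; exact: compact_set1.
by apply: HMJ; apply: U_compact.
Qed.

Lemma hut_in (S : set X) g x : MJ g -> S x -> Hutch MJ S (g x).
Proof. by move=> Mg Sx; apply: subset_closure; exists g => //; exists x. Qed.

Lemma K0_q : K 0 (q i0).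
Proof. by apply: (hut_in _ id); [exact: monoid_id|exact: U_q]. Qed.

Lemma bdd : exists2 D : R, 0 <= D & forall p, Lpt p -> d (q i0) p <= D.
Proof.
have [D1 hD1] := compact_bdd _ (q i0) (K_compact 0).
have D10 : 0 <= D1 by have := hD1 _ K0_q; rewrite mdistxx.
have l10 : 0 < 1 - lam by rewrite subr_gt0.
pose D := D1 / (1 - lam).
have hD : D * (1 - lam) = D1 by rewrite /D divfK // gt_eqF.
have D0 : 0 <= D by rewrite /D divr_ge0 // ltW.
exists D => // p; elim => [g i Mg|g j p' Mg hj Lp' IH].
  have : d (q i0) (g (q i)) <= D1 by apply: hD1; apply: hut_in => //; exact: U_q.
  have : 0 <= D * lam by rewrite mulr_ge0.
  move: hD; lra.
have h1 : d (q i0) (g (f j 1 (q i0))) <= D1.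
  by apply: hD1; apply: hut_in => //; apply: U_f.
have h2 := MJ_lip _ Mg (f j 1 (q i0)) (f j 1 p').
have h3 := hC _ hj (q i0) p'.
have tr := metric_triangle (q i0) (g (f j 1 (q i0))) (g (f j 1 p')).
have h4 : lam * d (q i0) p' <= lam * D by apply: ler_wpM2l.
move: hD; lra.
Qed.

Lemma approx D : 0 <= D -> (forall p, Lpt p -> d (q i0) p <= D) ->
  forall n p, Lpt p -> exists2 k, K n k & d p k <= lam ^+ n * D.
Proof.
move=> D0 hD; elim => [|n IH] p Lp.
  by exists (q i0); [exact: K0_q|rewrite expr0 mul1r metric_sym; exact: hD].
case: Lp => [g i Mg|g j p' Mg hj Lp'].
  exists (g (q i)); first by apply: hut_in => //; exact: U_q.
  by rewrite mdistxx mulr_ge0 // exprn_ge0.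
have [k' Kk' hk'] := IH p' Lp'.
exists (g (f j 1 k')); first by apply: hut_in => //; exact: U_f.
have h2 := MJ_lip _ Mg (f j 1 p') (f j 1 k').
have h3 := hC _ hj p' k'.
have h4 : lam * d p' k' <= lam * (lam ^+ n * D) by apply: ler_wpM2l.
rewrite exprS -mulrA; lra.
Qed.

Lemma small_pow (c : R) : 0 < c -> exists n : nat, lam ^+ n < c.
Proof.
move=> c0; have hl : `|lam| < 1 by rewrite ger0_norm.
have /cvgrPdist_lt := cvg_expr hl.
move=> /(_ _ c0) [n _ Hn]; exists n; have := Hn n (leqnn n).
by rewrite /= sub0r normrN ger0_norm ?exprn_ge0.
Qed.

Lemma MQ_compact : @complete_space R X -> compact (closure (@MQ R X N f q)).
Proof.
move=> cX; have [D D0 hD] := bdd.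
apply: tb_compact => // e e0.
have e2 : 0 < e / 2 by rewrite divr_gt0.
have D1 : 0 < D + 1 by lra.
have [n hn] := small_pow (e / 2 / (D + 1)) (divr_gt0 e2 D1).
have hn' : lam ^+ n * D < e / 2.
  rewrite ltr_pdivlMr // in hn.
  have : 0 <= lam ^+ n by rewrite exprn_ge0.
  move: hn; move: (lam ^+ n) => a; nra.
have [s hs] := compact_net _ _ (K_compact n) e2.
exists s => _ [h [i [[s' [Hs' ->]] ->]]].
have Lp := MQ_L s' Hs' id i (monoid_id _).
have [k Kk hk] := approx D D0 hD n _ Lp.
have [y ys yk] := hs k Kk; exists y => //.
have := metric_triangle y k (foldr comp id s' (q i)).
rewrite (metric_sym k) /=; move: hk hn' yk; move: (lam ^+ n * D) => a.
simpl; lra.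
Qed.

End Main.

Theorem mainTheorem4 (R : realType) (X : metricType R) (N : nat)
    (f : 'I_N -> R -> X -> X) (qt : 'I_N -> R -> X) (q : 'I_N -> X) :
  @complete_space R X ->
  (2 <= N)%N ->
  (* each f_(i,t), t in [0,1], is a continuous self-map of X *)
  (forall i t, 0 <= t <= 1 -> continuous (f i t)) ->
  (* (H1) *)
  (forall i x (t0 : R), 0 <= t0 <= 1 ->
     (fun t => f i t x) @ within [set t : R | 0 <= t <= 1] (nbhs t0) --> f i t0 x) ->
  (* (H2) *)
  (forall t, 0 <= t < 1 -> (LipF (fun i => f i t) < 1%:E)%E) ->
  (* (H3): qt i t is the (unique) fixed point of f_(i,t) for t in [0,1), and q_i is its limit *)
  (forall i t, 0 <= t < 1 -> f i t (qt i t) = qt i t) ->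
  (forall i, qt i t @[t --> 1^'-] --> q i) ->
  (* the monoid generated by the maps f_(i,1), i in J, is a compact IFS *)
  compact_IFS (monoid [set f i 1 | i in [set i | Lip (f i 1) = 1%:E]]) ->
  exists A : set X, lower_transition_attractor f q A /\ compact A.
Proof.
move=> cX N2 Hc H1 H2 H3 H4 HMJ.
have i0 : 'I_N := Ordinal (leq_trans (isT : (0 < 2)%N) N2).
have cont1 : forall i, continuous (f i 1) by move=> i; apply: Hc; rewrite ler01 lexx.
have flip := f1_lip N f H1 H2.
have fq := fixq N f qt q H1 H2 H3 H4.
have hc : forall i, exists c : R, 0 <= c < 1 /\ (Lip (f i 1) <> 1%:E -> lipb (f i 1) c).
  move=> i; case: (pselect (Lip (f i 1) = 1%:E)) => hi.
    by exists 0; split => //; rewrite lexx ltr01.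
  have : (Lip (f i 1%R) < 1%:E)%E.
    by rewrite lt_neqAle lipb_Lip // andbT; apply/eqP.
  by move/Lip_lt1 => [c hc1 hc2]; exists c; split.
have [c Hcc] := boolp.choice hc.
pose lam := \big[Num.max/0]_(i < N) c i.
have lam0 : 0 <= lam.
  by apply: le_trans (le_bigmax _ c i0); case/andP: (Hcc i0).1.
have lam1 : lam < 1.
  by apply: bigmax_lt => //= i _; case/andP: (Hcc i).1.
have hC : forall i, Lip (f i 1) <> 1%:E -> lipb (f i 1) lam.
  move=> i hi; apply: lipb_mono ((Hcc i).2 hi); exact: le_bigmax.
exists (closure (MQ N f q)); split; first exact: attr_lta.
exact: (MQ_compact N f q i0 cont1 flip lam lam0 lam1 hC HMJ cX).
Qed.
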